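(* For the sequence $\{\bm g^t=(\bm\beta^t,\bm z^t,\bm u^t)\}$ generated by the parallel PPA or the improved parallel PPA, $$\|\bm g^t-\bm g^{t+1}\|_{\bm H_*}^2\le\|\bm g^{t-1}-\bm g^t\|_{\bm H_*}^2,$$ where $\bm H_*=\bm H$ for the parallel PPA and $\bm H_*=\bm H_K$ for the improved parallel PPA.
   Context: Dantzig selector in split form: with $\bm X=(\bm X_1,\dots,\bm X_K)\in\mathbb R^{n\times p}$, $\bm y\in\mathbb R^n$, $\bm A=\bm X^\top\bm X=(\bm A_1,\dots,\bm A_K)$, $\bm A_i=\bm X^\top\bm X_i\in\mathbb R^{p\times p_i}$, $\bm\beta=(\bm\beta_{1\cdot}^\top,\dots,\bm\beta_{K\cdot}^\top)^\top$, solve $\min_{\bm\beta,\bm z}\sum_i\|\bm\beta_{i\cdot}\|_1+\delta(\bm z)$ s.t. $\sum_i\bm A_i\bm\beta_{i\cdot}-\bm z=\bm X^\top\bm y$, where $\delta$ is the indicator of $\{\bm z:\|\bm z\|_\infty\le n\lambda\}$. Parallel PPA with $\mu>0$ and $\eta$ larger than the largest eigenvalue of $\mu\bm A^\top\bm A$: $\bm\beta_{i\cdot}^{t+1}=\mathrm{sign}(\bm v_i)\odot\max\{|\bm v_i|-1/\eta,0\}$ with $\bm v_i=\bm\beta_{i\cdot}^t+\bm A_i^\top\bm u^t/\eta$; $\bm z^{t+1}=\min\{\max\{\bm z^t-\bm u^t/\mu,-n\lambda\},n\lambda\}$; $\bm u^{t+1}=\bm u^t-\frac{\mu}{2}[2(\bm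 A\bm\beta^{t+1}-\bm z^{t+1}-\bm X^\top\bm y)-(\bm A\bm\beta^t-\bm z^t-\bm X^\top\bm y)]$. Improved parallel PPA: same but $\eta$ replaced by $\eta_i$ (larger than the largest eigenvalue of $\mu\bm A_i^\top\bm A_i$) in block $i$, and $\frac{\mu}{2}$ replaced by $\frac{\mu}{K+1}$ in the $\bm u$ update. $\|\bm v\|_{\bm H}=\sqrt{\bm v^\top\bm H\bm v}$, with $\bm H=\begin{pmatrix}\eta\bm I_p&\bm 0&\bm A^\top\\\bm 0&\mu\bm I_p&-\bm I_p\\\bm A&-\bm I_p&\frac{2}{\mu}\bm I_p\end{pmatrix}$ and $\bm H_K=\begin{pmatrix}\mathrm{diag}(\eta_1\bm I_{p_1},\dots,\eta_K\bm I_{p_K},\mu\bm I_p)&\bm G^\top\\\bm G&\frac{K+1}{\mu}\bm I_p\end{pmatrix}$, $\bm G=(\bm A_1,\dots,\bm A_K,-\bm I_p)$; both positive definite. *)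

(* Defs.v *)
From HB Require Import structures.
From mathcomp Require Import all_boot all_order all_algebra.
From mathcomp Require Import reals.
Set Implicit Arguments. Unset Strict Implicit. Unset Printing Implicit Defensive.
Import Order.TTheory GRing.Theory Num.Theory.
Local Open Scope ring_scope.

Section PPA.
Variable R : realType.

Definition sqnormH (m : nat) (H : 'M[R]_m) (v : 'cV[R]_m) : R :=
  (v^T *m H *m v) 0 0.

Definition soft (m : nat) (c : R) (v : 'cV[R]_m) : 'cV[R]_m :=
  map_mx (fun x => Num.sg x * Num.max (`|x| - c) 0) v.

Definition clip (m : nat) (a : R) (w : 'cV[R]_m) : 'cV[R]_m :=
  map_mx (fun x => Num.min (Num.max x (- a)) a) w.

Variables (n K : nat) (pk : 'I_K -> nat).
Notation p := (\sum_(i < K) pk i)%N.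

Definition Amat (X : 'M[R]_(n, p)) : 'M[R]_p := X^T *m X.
Definition Ablk (X : 'M[R]_(n, p)) (i : 'I_K) : 'M[R]_(p, pk i) :=
  X^T *m submxrow X i.

Definition beta_step (X : 'M[R]_(n, p)) (etas : 'I_K -> R)
    (beta u : 'cV[R]_p) : 'cV[R]_p :=
  \mxcol_(i < K) soft (etas i)^-1
     (submxcol beta i + (etas i)^-1 *: ((Ablk X i)^T *m u)).

Definition z_step (lam mu : R) (z u : 'cV[R]_p) : 'cV[R]_p :=
  clip (n%:R * lam) (z - mu^-1 *: u).

Definition u_step (X : 'M[R]_(n, p)) (y : 'cV[R]_n) (c : R)
    (beta z u beta' z' : 'cV[R]_p) : 'cV[R]_p :=
  u - c *: (2%:R *: (Amat X *m beta' - z' - X^T *m y)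
            - (Amat X *m beta - z - X^T *m y)).

(* a sequence generated by the (block) PPA with step sizes etas and
   multiplier constant c (c = mu/2 for the parallel PPA, c = mu/(K+1)
   for the improved parallel PPA) *)
Definition ppa_seq (X : 'M[R]_(n, p)) (y : 'cV[R]_n) (lam mu : R)
    (etas : 'I_K -> R) (c : R) (beta z u : nat -> 'cV[R]_p) : Prop :=
  forall t,
    [/\ beta t.+1 = beta_step X etas (beta t) (u t),
        z t.+1 = z_step lam mu (z t) (u t)
      & u t.+1 = u_step X y c (beta t) (z t) (u t) (beta t.+1) (z t.+1)].

Definition gvec (b z u : 'cV[R]_p) : 'cV[R]_(p + p + p) := col_mx (col_mx b z) u.

Definition Hmat (X : 'M[R]_(n, p)) (eta mu : R) : 'M[R]_(p + p + p) :=
  block_mx (block_mx (eta%:M) 0 0 (mu%:M))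
           (col_mx (Amat X)^T (- 1%:M))
           (row_mx (Amat X) (- 1%:M))
           ((2%:R / mu)%:M).

Definition Gmat (X : 'M[R]_(n, p)) : 'M[R]_(p, p + p) :=
  row_mx (\mxrow_(i < K) Ablk X i) (- 1%:M).

Definition HKmat (X : 'M[R]_(n, p)) (etas : 'I_K -> R) (mu : R)
    : 'M[R]_(p + p + p) :=
  block_mx (block_mx (\mxdiag_(i < K) ((etas i)%:M : 'M[R]_(pk i))) 0 0 (mu%:M))
           (Gmat X)^T
           (Gmat X)
           ((K.+1%:R / mu)%:M).

End PPA.

(* Main.v *)
Require Import Defs.
From HB Require Import structures.
From mathcomp Require Import all_boot all_order all_algebra.
From mathcomp Require Import reals.
From mathcomp Require Import sesquilinear spectral.
From mathcomp Require Import complex.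
From mathcomp Require Import ring lra.
Import Order.TTheory GRing.Theory Num.Theory.
Set Implicit Arguments. Unset Strict Implicit. Unset Printing Implicit Defensive.
Local Open Scope ring_scope.

Section Spec.
Local Open Scope sesquilinear_scope.
Variable R : rcfType.
Notation C := (complex R).
Notation f := (real_complex R).

Lemma conjC_f (x : R) : (f x)^* = f x.
Proof. exact: conjc_real. Qed.

Lemma herm_of_sym m (S : 'M[R]_m) : S^T = S ->
  map_mx f S \is hermsymmx.
Proof.
move=> hS; apply/is_hermitianmxP; rewrite expr0 scale1r.
apply/matrixP => i j; rewrite !mxE conjC_f.
by rewrite -[in LHS]hS mxE.
Qed.

Lemma eig_transfer m (S : 'M[R]_m) r :
  eigenvalue (map_mx f S) (f r) -> eigenvalue S r.
Proof.
rewrite !eigenvalue_root_char -map_char_poly /root horner_map.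
by rewrite fmorph_eq0.
Qed.

Lemma spec_real m (S : 'M[R]_m) : S^T = S ->
  exists (P : 'M[C]_m) (d : 'rV[R]_m),
   [/\ P *m P^t* = 1%:M, P^t* *m P = 1%:M,
       map_mx f S = P^t* *m diag_mx (map_mx f d) *m P
     & forall k, eigenvalue S (d 0 k)].
Proof.
move=> hS; set A := map_mx f S.
have hA : A \is hermsymmx by apply: herm_of_sym.
have /orthomx_spectralP eA := hermitian_normalmx hA.
have dreal := hermitian_spectral_diag_real hA.
set P := spectralmx A in eA; set dC := spectral_diag A in eA dreal.
have Pu : P \is unitarymx by apply: spectral_unitarymx.
have PPt : P *m P^t* = 1%:M by apply/unitarymxP.
have PtP : P^t* *m P = 1%:M.
  by rewrite -[P^t*]mul1mx mulmxKtV.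
have ed : dC = map_mx f (map_mx (@complex.Re R) dC).
  apply/matrixP => i j; rewrite !mxE RRe_real //.
  by move/mxOverP: dreal; apply.
exists P, (map_mx (@complex.Re R) dC); split => //.
  by rewrite -ed -invmx_unitary.
move=> k; apply: eig_transfer.
rewrite (_ : f _ = (map_mx f (map_mx (@complex.Re R) dC)) 0 k); last by rewrite [RHS]mxE.
rewrite -ed.
apply/eigenvalueP; exists (row k P).
  have -> : row k P *m A = row k (P *m A) by rewrite -row_mul.
  rewrite [in P *m A]eA !mulmxA mulmxV ?spectral_unit // mul1mx.
  by rewrite row_mul row_diag_mx -scalemxAl -rowE.
apply/negP => /eqP h0.
have : row k P *m P^t* = row k (1%:M : 'M[C]_m) by rewrite -row_mul PPt.
rewrite h0 mul0mx => /rowP /(_ k); rewrite !mxE eqxx /= => /eqP.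
by rewrite eq_sym oner_eq0.
Qed.


Lemma quad_bound m (S : 'M[R]_m) (eta : R) : S^T = S ->
  (forall a, eigenvalue S a -> a < eta) ->
  forall x : 'cV[R]_m, (x^T *m S *m x) 0 0 <= eta * (x^T *m x) 0 0.
Proof.
move=> hS heig x.
have [P [d [PPt PtP eS eig]]] := @spec_real m S hS.
have hm : forall (M : 'M[R]_1), f (M 0 0) = (map_mx f M) 0 0 by move=> M; rewrite [RHS]mxE.
rewrite -lecR rmorphM /= !hm !map_mxM -map_trmx.
idtac.
set w := (map_mx f x)^T.
have hw : w^t* = map_mx f x.
  by apply/matrixP => i j; rewrite !mxE conjC_f.
set y := w *m P^t*.
have hy : y^t* = P *m w^t*.
  by rewrite /y trmx_mul map_mxM trmxCK.
have e1 : w *m map_mx f S *m map_mx f x = y *m diag_mx (map_mx f d) *m y^t*.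
  by rewrite hy hw eS /y !mulmxA.
have e2 : w *m map_mx f x = y *m y^t*.
  by rewrite hy hw /y mulmxA -[w *m _ *m _]mulmxA PtP mulmx1.
clearbody y.
rewrite e1 e2 -subr_ge0 !mxE mulr_sumr -sumrB; apply: sumr_ge0 => k _.
rewrite mul_mx_diag !mxE.
have -> : f eta * (y 0 k * (y 0 k)^*) - y 0 k * f (d 0 k) * (y 0 k)^* =
   (f eta - f (d 0 k)) * (y 0 k * (y 0 k)^*) by ring.
apply: mulr_ge0; last exact: mulcJ_ge0.
by rewrite -rmorphB ler0c subr_ge0 ltW // heig.
Qed.

Lemma eig_exists m (S : 'M[R]_m) : S^T = S -> (0 < m)%N -> exists a, eigenvalue S a.
Proof.
move=> hS hm; have [P [d [_ _ _ eig]]] := @spec_real m S hS.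
by exists (d 0 (Ordinal hm)).
Qed.
End Spec.

Section Scalar.
Variable R : realType.

Definition softf (c x : R) := Num.sg x * Num.max (`|x| - c) 0.
Definition clipf (a x : R) := Num.min (Num.max x (- a)) a.

Lemma softf_cases c x : 0 <= c ->
  [\/ c < x /\ softf c x = x - c, x < - c /\ softf c x = x + c
    | - c <= x <= c /\ softf c x = 0].
Proof.
move=> hc; rewrite /softf.
have [hx|hx] := ltP c x.
  apply: Or31; split => //.
  have xp : 0 < x by lra.
  rewrite gtr0_sg // ger0_norm ?ltW // mul1r.
  by rewrite (_ : Num.max _ _ = x - c) //; apply/max_idPl; rewrite subr_ge0 ltW.
have [hx'|hx'] := ltP x (- c).
  apply: Or32; split => //.
  have xn : x < 0 by lra.
  rewrite ltr0_sg // ltr0_norm // mulN1r.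
  rewrite (_ : Num.max _ _ = - x - c); first by ring.
  by apply/max_idPl; lra.
apply: Or33; split; first by apply/andP; split.
rewrite (_ : Num.max _ _ = 0) ?mulr0 //; apply/max_idPr.
rewrite subr_le0; case: (lerP 0 x) => h0.
  by rewrite ger0_norm.
by rewrite ltr0_norm // lerNl.
Qed.

Lemma softf_mono c x y : 0 <= c ->
  0 <= (softf c x - softf c y) * ((x - softf c x) - (y - softf c y)).
Proof.
move=> hc.
by case: (@softf_cases c x hc) => [[h1 ->]|[h1 ->]|[/andP[h1 h1'] ->]];
case: (@softf_cases c y hc) => [[h2 ->]|[h2 ->]|[/andP[h2 h2'] ->]]; nra.
Qed.

Lemma clipf_cases a x : 0 <= a ->
  [\/ a < x /\ clipf a x = a, x < - a /\ clipf a x = - a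
    | - a <= x <= a /\ clipf a x = x].
Proof.
move=> ha; rewrite /clipf.
have [h1|h1] := leP x (- a).
  have [h2|h2] := leP (-a) a; last by lra.
  have [h3|h3] := eqVneq x (- a).
    by apply: Or33; split; [apply/andP; split; lra | rewrite h3].
  by apply: Or32; split => //; rewrite lt_neqAle h3 h1.
have [h2|h2] := leP x a.
  by apply: Or33; split => //; apply/andP; split; lra.
by apply: Or31.
Qed.

Lemma clipf_mono a x y : 0 <= a ->
  0 <= (clipf a x - clipf a y) * ((x - clipf a x) - (y - clipf a y)).
Proof.
move=> ha.
by case: (@clipf_cases a x ha) => [[h1 ->]|[h1 ->]|[/andP[h1 h1'] ->]];
case: (@clipf_cases a y ha) => [[h2 ->]|[h2 ->]|[/andP[h2 h2'] ->]]; nra.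
Qed.
End Scalar.

Section IP.
Variable R : realType.

Definition ip m (x y : 'cV[R]_m) : R := (x^T *m y) 0 0.

Lemma ip_sum m (x y : 'cV[R]_m) : ip x y = \sum_i x i 0 * y i 0.
Proof. by rewrite /ip mxE; apply: eq_bigr => i _; rewrite mxE. Qed.

Lemma ipDr m (x y z : 'cV[R]_m) : ip x (y + z) = ip x y + ip x z.
Proof. by rewrite /ip mulmxDr mxE. Qed.

Lemma ipNr m (x y : 'cV[R]_m) : ip x (- y) = - ip x y.
Proof. by rewrite /ip mulmxN mxE. Qed.

Lemma ipBr m (x y z : 'cV[R]_m) : ip x (y - z) = ip x y - ip x z.
Proof. by rewrite ipDr ipNr. Qed.

Lemma ipZr m a (x y : 'cV[R]_m) : ip x (a *: y) = a * ip x y.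
Proof. by rewrite /ip -scalemxAr mxE. Qed.

Lemma ipC m (x y : 'cV[R]_m) : ip x y = ip y x.
Proof. by rewrite !ip_sum; apply: eq_bigr => i _; rewrite mulrC. Qed.

Lemma ipDl m (x y z : 'cV[R]_m) : ip (y + z) x = ip y x + ip z x.
Proof. by rewrite ipC ipDr ipC (ipC x). Qed.

Lemma ipNl m (x y : 'cV[R]_m) : ip (- y) x = - ip y x.
Proof. by rewrite ipC ipNr ipC. Qed.

Lemma ipBl m (x y z : 'cV[R]_m) : ip (y - z) x = ip y x - ip z x.
Proof. by rewrite ipDl ipNl. Qed.

Lemma ipZl m a (x y : 'cV[R]_m) : ip (a *: y) x = a * ip y x.
Proof. by rewrite ipC ipZr ipC. Qed.

Lemma ip_tr m k (M : 'M[R]_(m, k)) (x : 'cV[R]_m) (y : 'cV[R]_k) :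
  ip x (M *m y) = ip (M^T *m x) y.
Proof. by rewrite /ip trmx_mul trmxK mulmxA. Qed.

Lemma ip_ge0 m (x : 'cV[R]_m) : 0 <= ip x x.
Proof. by rewrite ip_sum; apply: sumr_ge0 => i _; rewrite -expr2 sqr_ge0. Qed.

Lemma ip_sumr m (I : finType) (x : 'cV[R]_m) (F : I -> 'cV[R]_m) :
  ip x (\sum_i F i) = \sum_i ip x (F i).
Proof.
apply: (big_ind2 (fun a b => ip x a = b)) => //.
  by rewrite /ip mulmx0 mxE.
by move=> a1 a2 b1 b2 <- <-; rewrite ipDr.
Qed.

Lemma ip_mxcol (k : nat) (q : 'I_k -> nat) (x y : forall i, 'cV[R]_(q i)) :
  ip (\mxcol_i x i) (\mxcol_i y i) = \sum_i ip (x i) (y i).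
Proof.
rewrite /ip tr_mxcol mul_mxrow_mxcol summxE.
by apply: eq_bigr.
Qed.

Lemma ip0 (x y : 'cV[R]_0) : ip x y = 0.
Proof. by rewrite ip_sum big_ord0. Qed.

Lemma soft_mono m c (v v' : 'cV[R]_m) : 0 <= c ->
  0 <= ip (soft c v - soft c v') ((v - soft c v) - (v' - soft c v')).
Proof.
move=> hc; rewrite ip_sum; apply: sumr_ge0 => i _; rewrite !mxE.
exact: (@softf_mono R c).
Qed.

Lemma clip_mono m a (v v' : 'cV[R]_m) : 0 <= a ->
  0 <= ip (clip a v - clip a v') ((v - clip a v) - (v' - clip a v')).
Proof.
move=> ha; rewrite ip_sum; apply: sumr_ge0 => i _; rewrite !mxE.
exact: (@clipf_mono R a).
Qed.

Lemma eD m k (M N : 'M[R]_(m, k)) i j : (M + N) i j = M i j + N i j.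
Proof. by rewrite mxE. Qed.
Lemma eN m k (M : 'M[R]_(m, k)) i j : (- M) i j = - M i j.
Proof. by rewrite mxE. Qed.
Lemma eZ m k a (M : 'M[R]_(m, k)) i j : (a *: M) i j = a * M i j.
Proof. by rewrite mxE. Qed.

Definition Hgen p (D A : 'M[R]_p) (mu kap : R) : 'M[R]_(p + p + p) :=
  block_mx (block_mx D 0 0 (mu%:M)) (col_mx A^T (- 1%:M))
           (row_mx A (- 1%:M)) (kap%:M).

Lemma Qform p (D A : 'M[R]_p) mu kap (v1 v2 v3 w1 w2 w3 : 'cV[R]_p) :
  ((col_mx (col_mx v1 v2) v3)^T *m Hgen D A mu kap *m col_mx (col_mx w1 w2) w3) 0 0 =
  ip v1 (D *m w1) + ip v1 (A^T *m w3) + mu * ip v2 w2 - ip v2 w3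
  + ip v3 (A *m w1) - ip v3 w2 + kap * ip v3 w3.
Proof.
rewrite /Hgen !tr_col_mx.
rewrite (mul_row_block (row_mx v1^T v2^T) v3^T).
rewrite (mul_row_block v1^T v2^T) !mul_row_col mul_mx_row add_row_mx mul_row_col.
rewrite !mulmx0 !addr0 !add0r !mul_mx_scalar !mulmxN !mulmx1 !mulmxDl.
rewrite -!scalemxAl !mulNmx !eD !eN !eZ /ip !mulmxA -!addrA; congr (_ + _).
rewrite !addrA; lra.
Qed.

Lemma ipAT p (A : 'M[R]_p) (x y : 'cV[R]_p) : ip x (A^T *m y) = ip y (A *m x).
Proof. by rewrite ip_tr trmxK ipC. Qed.

Lemma core p (D A : 'M[R]_p) mu kap (b1 b2 b3 d1 d2 d3 : 'cV[R]_p) :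
  D^T = D ->
  (forall v1 v2 v3 : 'cV[R]_p, 0 <= ((col_mx (col_mx v1 v2) v3)^T *m
       Hgen D A mu kap *m col_mx (col_mx v1 v2) v3) 0 0) ->
  0 <= ip b1 (D *m d1 + A^T *m (b3 + d3)) ->
  0 <= ip b2 (mu *: d2 - (b3 + d3)) ->
  kap *: d3 = (A *m b1 - b2) - (A *m d1 - d2) ->
  sqnormH (Hgen D A mu kap) (col_mx (col_mx b1 b2) b3)
  <= sqnormH (Hgen D A mu kap) (col_mx (col_mx (b1 + d1) (b2 + d2)) (b3 + d3)).
Proof.
move=> hD hpsd h1 h2 h3.
have hq := hpsd d1 d2 d3; rewrite Qform in hq.
have h3' : kap * ip b3 d3 = ip b3 (A *m b1) - ip b3 b2 - ip b3 (A *m d1) + ip b3 d2.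
  rewrite -ipZr h3 !ipBr; lra.
have sD : ip d1 (D *m b1) = ip b1 (D *m d1).
  by rewrite ip_tr hD ipC.
have := ipC b2 d2; have := ipC b2 b3; have := ipC b2 d3; have := ipC d2 b3;
have := ipC d2 d3; have := ipC b3 d3.
move: h1 h2 hq h3' sD; rewrite /sqnormH !Qform.
rewrite !(mulmxDr, ipDl, ipDr, ipAT, ipBr, ipZr, ipNr, ipBl, ipZl, ipNl) !(mulrDr, mulrN).
rewrite (ipC d2 b2) (ipC d3 b3).
lra.
Qed.

Lemma psd_gen p (D A : 'M[R]_p) mu kap : 0 < mu ->
  (forall x u : 'cV[R]_p,
     0 <= ip x (D *m x) + 2 * ip u (A *m x) + (kap - mu^-1) * ip u u) ->
  forall v1 v2 v3 : 'cV[R]_p, 0 <= ((col_mx (col_mx v1 v2) v3)^T *m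
       Hgen D A mu kap *m col_mx (col_mx v1 v2) v3) 0 0.
Proof.
move=> hmu hx v1 v2 v3; rewrite Qform ipAT (ipC v3 v2).
have h0 := ip_ge0 (mu *: v2 - v3).
have e : mu^-1 * ip (mu *: v2 - v3) (mu *: v2 - v3) =
   mu * ip v2 v2 - 2 * ip v2 v3 + mu^-1 * ip v3 v3.
  rewrite !(ipBr, ipBl, ipZr, ipZl) (ipC v3 v2).
  by field; rewrite gt_eqF.
have h1 : 0 <= mu^-1 * ip (mu *: v2 - v3) (mu *: v2 - v3).
  by apply: mulr_ge0 => //; rewrite invr_ge0 ltW.
have h2 := hx v1 v3.
rewrite mulrBl in h2; lra.
Qed.
End IP.


Section Bounds.
Variable R : realType.

Lemma blockpsd m' m (B : 'M[R]_(m', m)) eta mu (x : 'cV[R]_m) (u : 'cV[R]_m') :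
  0 < mu -> mu * ip (B *m x) (B *m x) <= eta * ip x x ->
  0 <= eta * ip x x + 2 * ip u (B *m x) + mu^-1 * ip u u.
Proof.
move=> hmu hb.
have e : mu^-1 * ip (mu *: (B *m x) + u) (mu *: (B *m x) + u) =
   mu * ip (B *m x) (B *m x) + 2 * ip u (B *m x) + mu^-1 * ip u u.
  rewrite !(ipDr, ipDl, ipZr, ipZl) (ipC (B *m x) u).
  by field; rewrite gt_eqF.
have h1 : 0 <= mu^-1 * ip (mu *: (B *m x) + u) (mu *: (B *m x) + u).
  by apply: mulr_ge0; [rewrite invr_ge0 ltW | apply: ip_ge0].
lra.
Qed.

Lemma ip_gt0 m (x : 'cV[R]_m) : x != 0 -> 0 < ip x x.
Proof.
move=> xn0; rewrite lt_def ip_ge0 andbT; apply: contra xn0 => /eqP h.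
apply/eqP/matrixP => i j; rewrite ord1 mxE.
have : x i 0 * x i 0 = 0.
  move: h; rewrite ip_sum => h; apply: (psumr_eq0P _ h) => // k _.
  by rewrite -expr2 sqr_ge0.
by move/eqP; rewrite mulf_eq0 orbb => /eqP.
Qed.

Lemma eig_bound m' m (B : 'M[R]_(m', m)) mu eta : 0 < mu ->
  (forall a, eigenvalue (mu *: (B^T *m B)) a -> a < eta) ->
  (forall x, mu * ip (B *m x) (B *m x) <= eta * ip x x) /\ ((0 < m)%N -> 0 < eta).
Proof.
move=> hmu heig; set S := mu *: (B^T *m B).
have hS : S^T = S.
  rewrite /S; have -> : (mu *: (B^T *m B))^T = mu *: (B^T *m B)^T.
    by apply/matrixP => i j; rewrite !mxE.
  by rewrite trmx_mul; congr (_ *: (_ *m _)); apply/matrixP => i j; rewrite !mxE.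
have hq : forall x, ip x (S *m x) = mu * ip (B *m x) (B *m x).
  by move=> x; rewrite /S -scalemxAl ipZr -mulmxA ip_tr ipC.
split.
  move=> x; rewrite -hq; have := quad_bound hS heig x.
  by rewrite /ip mulmxA.
move=> hm; have [a ha] := eig_exists hS hm.
have hlt := heig a ha.
case/eigenvalueP: ha => v hv vn0.
have xn0 : v^T != 0 by apply: contra vn0 => /eqP h; rewrite -[v]trmxK h trmx0.
have hx := ip_gt0 xn0.
have e : ip v^T (S *m v^T) = a * ip v^T v^T.
  by rewrite /ip trmxK mulmxA hv -scalemxAl mxE.
have hB : 0 <= ip v^T (S *m v^T) by rewrite hq; apply: mulr_ge0; [apply: ltW | apply: ip_ge0].
rewrite e in hB.
have ha0 : 0 <= a by rewrite -(pmulr_lge0 _ hx).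
by apply: le_lt_trans hlt.
Qed.

End Bounds.

Section Main.
Variables (R : realType) (n K : nat) (pk : 'I_K -> nat).
Local Notation p := (\sum_(i < K) pk i)%N.

Lemma trmxZ' m k a (M : 'M[R]_(m, k)) : (a *: M)^T = a *: M^T.
Proof. by apply/matrixP => i j; rewrite !mxE. Qed.

Lemma trmxN1 m : (- (1%:M : 'M[R]_m))^T = - 1%:M.
Proof. by apply/matrixP => i j; rewrite !mxE eq_sym. Qed.

Lemma mxrow_Ablk (X : 'M[R]_(n, p)) : \mxrow_i Ablk X i = Amat X.
Proof. by rewrite /Ablk -mul_mxrow submxrowK. Qed.

Lemma subcol_AT (X : 'M[R]_(n, p)) (u : 'cV[R]_p) i :
  submxcol ((Amat X)^T *m u) i = (Ablk X i)^T *m u.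
Proof. by rewrite -mxrow_Ablk tr_mxrow mxcol_mul mxcolK. Qed.

Definition Ddiag (etas : 'I_K -> R) : 'M[R]_p :=
  \mxdiag_i ((etas i)%:M : 'M[R]_(pk i)).

Lemma Ddiag_tr etas : (Ddiag etas)^T = Ddiag etas.
Proof. by rewrite /Ddiag tr_mxdiag; apply: eq_mxdiag => i; rewrite tr_scalar_mx. Qed.

Lemma ip_empty m (x y : 'cV[R]_m) : m = 0%N -> ip x y = 0.
Proof.
move=> h0; rewrite ip_sum big1 // => j _; exfalso.
by case: j => j hj; move: hj; rewrite h0.
Qed.

Lemma step_beta (X : 'M[R]_(n, p)) etas (b0 b1 b2 u0 u1 : 'cV[R]_p) :
  (forall i, (0 < pk i)%N -> 0 < etas i) ->
  b1 = beta_step X etas b0 u0 -> b2 = beta_step X etas b1 u1 ->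
  0 <= ip (b1 - b2) (Ddiag etas *m ((b0 - b1) - (b1 - b2)) + (Amat X)^T *m (u0 - u1)).
Proof.
move=> heta hb1 hb2.
set w := (b0 - b1) - (b1 - b2).
have e : Ddiag etas *m w + (Amat X)^T *m (u0 - u1) =
   \mxcol_i (etas i *: submxcol w i + (Ablk X i)^T *m (u0 - u1)).
  apply/mxcolP => i; rewrite mxcolK submxcolD subcol_AT.
  by rewrite /Ddiag -[w in LHS]submxcolK mul_mxdiag_mxcol mxcolK mul_scalar_mx.
rewrite e -[b1 - b2]submxcolK ip_mxcol; apply: sumr_ge0 => i _.
case: (posnP (pk i)) => [h0|hpos]; first by rewrite ip_empty.
have hei := heta i hpos.
rewrite /w !submxcolB.
have eb1 : submxcol b1 i = soft (etas i)^-1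
     (submxcol b0 i + (etas i)^-1 *: ((Ablk X i)^T *m u0)) by rewrite hb1 /beta_step mxcolK.
have eb2 : submxcol b2 i = soft (etas i)^-1
     (submxcol b1 i + (etas i)^-1 *: ((Ablk X i)^T *m u1)) by rewrite [in LHS]hb2 /beta_step mxcolK.
set s0 := submxcol b0 i in eb1 *; set s1 := submxcol b1 i in eb1 eb2 *.
set s2 := submxcol b2 i in eb2 *.
set g0 := (Ablk X i)^T *m u0 in eb1; set g1 := (Ablk X i)^T *m u1 in eb2.
have hm := @soft_mono R _ (etas i)^-1 (s0 + (etas i)^-1 *: g0) (s1 + (etas i)^-1 *: g1).
rewrite -eb1 -eb2 in hm.
have -> : etas i *: (s0 - s1 - (s1 - s2)) + (Ablk X i)^T *m (u0 - u1) =
  etas i *: (s0 + (etas i)^-1 *: g0 - s1 - (s1 + (etas i)^-1 *: g1 - s2)).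
  rewrite mulmxBr -/g0 -/g1; apply/matrixP => a b; rewrite !mxE.
  by field; rewrite gt_eqF.
rewrite ipZr; apply: mulr_ge0; first exact: ltW.
by apply: hm; rewrite invr_ge0 ltW.
Qed.


Lemma step_z lam mu (z0 z1 z2 u0 u1 : 'cV[R]_p) : 0 < mu -> 0 <= n%:R * lam ->
  z1 = z_step n lam mu z0 u0 -> z2 = z_step n lam mu z1 u1 ->
  0 <= ip (z1 - z2) (mu *: ((z0 - z1) - (z1 - z2)) - (u0 - u1)).
Proof.
move=> hmu hl hz1 hz2.
have hm := @clip_mono R _ (n%:R * lam) (z0 - mu^-1 *: u0) (z1 - mu^-1 *: u1) hl.
rewrite -/(z_step n lam mu z0 u0) -/(z_step n lam mu z1 u1) -hz1 -hz2 in hm.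
have -> : mu *: ((z0 - z1) - (z1 - z2)) - (u0 - u1) =
   mu *: (z0 - mu^-1 *: u0 - z1 - (z1 - mu^-1 *: u1 - z2)).
  apply/matrixP => a b; rewrite !mxE.
  by field; rewrite gt_eqF.
by rewrite ipZr; apply: mulr_ge0 => //; apply: ltW.
Qed.

Lemma step_u (X : 'M[R]_(n, p)) (y : 'cV[R]_n) c kap
    (b0 b1 b2 z0 z1 z2 u0 u1 u2 : 'cV[R]_p) : kap * c = 1 ->
  u1 = u_step X y c b0 z0 u0 b1 z1 -> u2 = u_step X y c b1 z1 u1 b2 z2 ->
  kap *: ((u0 - u1) - (u1 - u2)) =
  (Amat X *m (b1 - b2) - (z1 - z2)) - (Amat X *m ((b0 - b1) - (b1 - b2)) - ((z0 - z1) - (z1 - z2))).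
Proof.
move=> hkc hu1 hu2.
have kn0 : kap != 0 by apply/eqP => k0; move: hkc; rewrite k0 mul0r => /eqP; rewrite eq_sym oner_eq0.
rewrite hu2 hu1 /u_step !mulmxBr.
have -> : c = kap^-1 by apply: (mulfI kn0); rewrite hkc mulfV.
move: (Amat X *m b0) (Amat X *m b1) (Amat X *m b2) (X^T *m y) => a0 a1 a2 xy.
apply/matrixP => i j; rewrite !mxE.
by field.
Qed.


Lemma generic (X : 'M[R]_(n, p)) (y : 'cV[R]_n) lam mu etas c kap (D : 'M[R]_p)
    (beta z u : nat -> 'cV[R]_p) t :
  0 < mu -> 0 <= n%:R * lam -> kap * c = 1 ->
  (forall i, (0 < pk i)%N -> 0 < etas i) ->
  D = Ddiag etas ->
  (forall v1 v2 v3 : 'cV[R]_p, 0 <= ((col_mx (col_mx v1 v2) v3)^T *m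
       Hgen D (Amat X) mu kap *m col_mx (col_mx v1 v2) v3) 0 0) ->
  ppa_seq X y lam mu etas c beta z u ->
  sqnormH (Hgen D (Amat X) mu kap)
    (gvec (beta t.+1) (z t.+1) (u t.+1) - gvec (beta t.+2) (z t.+2) (u t.+2))
  <= sqnormH (Hgen D (Amat X) mu kap)
    (gvec (beta t) (z t) (u t) - gvec (beta t.+1) (z t.+1) (u t.+1)).
Proof.
move=> hmu hl hkc heta hD hpsd hs.
have [e1 e2 e3] := hs t; have [f1 f2 f3] := hs t.+1.
rewrite /gvec !opp_col_mx !add_col_mx.
set b1 := beta t.+1 - beta t.+2; set b2 := z t.+1 - z t.+2; set b3 := u t.+1 - u t.+2.
set d1 := (beta t - beta t.+1) - b1; set d2 := (z t - z t.+1) - b2.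
set d3 := (u t - u t.+1) - b3.
have E1 : beta t - beta t.+1 = b1 + d1 by rewrite /d1 [b1 + _]addrC subrK.
have E2 : z t - z t.+1 = b2 + d2 by rewrite /d2 [b2 + _]addrC subrK.
have E3 : u t - u t.+1 = b3 + d3 by rewrite /d3 [b3 + _]addrC subrK.
rewrite E1 E2 E3; apply: core => //.
- by rewrite hD Ddiag_tr.
- rewrite -E3 hD; exact: (step_beta heta e1 f1).
- rewrite -E3; exact: (step_z hmu hl e2 f2).
- exact: (step_u hkc e3 f3).
Qed.

End Main.

Theorem proposition4 (R : realType) (n K : nat) (pk : 'I_K -> nat)
    (X : 'M[R]_(n, \sum_(i < K) pk i)) (y : 'cV[R]_n) (lam mu : R) :
  0 < lam -> 0 < mu ->
  (* parallel PPA, H_* = H *)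
  (forall (eta : R),
     (forall a : R, eigenvalue (mu *: ((Amat X)^T *m Amat X)) a -> a < eta) ->
     forall beta z u : nat -> 'cV[R]_(\sum_(i < K) pk i),
       ppa_seq X y lam mu (fun _ => eta) (mu / 2%:R) beta z u ->
       forall t : nat,
         sqnormH (Hmat X eta mu)
           (gvec (beta t.+1) (z t.+1) (u t.+1) - gvec (beta t.+2) (z t.+2) (u t.+2))
         <= sqnormH (Hmat X eta mu)
           (gvec (beta t) (z t) (u t) - gvec (beta t.+1) (z t.+1) (u t.+1)))
  /\
  (* improved parallel PPA, H_* = H_K *)
  (forall (etas : 'I_K -> R),
     (forall (i : 'I_K) (a : R),
        eigenvalue (mu *: ((Ablk X i)^T *m Ablk X i)) a -> a < etas i) ->
     forall beta z u : nat -> 'cV[R]_(\sum_(i < K) pk i),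
       ppa_seq X y lam mu etas (mu / K.+1%:R) beta z u ->
       forall t : nat,
         sqnormH (HKmat X etas mu)
           (gvec (beta t.+1) (z t.+1) (u t.+1) - gvec (beta t.+2) (z t.+2) (u t.+2))
         <= sqnormH (HKmat X etas mu)
           (gvec (beta t) (z t) (u t) - gvec (beta t.+1) (z t.+1) (u t.+1))).
Proof.
move=> hlam hmu.
have hnl : 0 <= n%:R * lam by apply: mulr_ge0; [apply: ler0n | apply: ltW].
have mun0 : mu != 0 by rewrite gt_eqF.
split.
  move=> eta heig beta z u hs t.
  have [hb hpos] := eig_bound hmu heig.
  have heta : forall i : 'I_K, (0 < pk i)%N -> 0 < eta.
    by move=> i hi; apply: hpos; rewrite (bigD1 i) //= addn_gt0 hi.
  have -> : Hmat X eta mu = Hgen (eta%:M) (Amat X) mu (2%:R / mu) by [].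
  apply: (@generic R n K pk X y lam mu (fun _ => eta) (mu / 2%:R)) => //.
  - by field.
  - by rewrite /Ddiag mxdiagZ.
  apply: psd_gen => // x v.
  rewrite mul_scalar_mx ipZr.
  have -> : 2%:R / mu - mu^-1 = mu^-1 by field.
  exact: blockpsd.
move=> etas heig beta z u hs t.
have heta : forall i : 'I_K, (0 < pk i)%N -> 0 < etas i.
  by move=> i; have [_ h] := eig_bound hmu (heig i); exact: h.
have -> : HKmat X etas mu = Hgen (Ddiag pk etas) (Amat X) mu (K.+1%:R / mu).
  by rewrite /HKmat /Gmat tr_row_mx mxrow_Ablk trmxN1.
apply: (@generic R n K pk X y lam mu etas (mu / K.+1%:R)) => //.
  by field; rewrite mun0 andbT gt_eqF //; have := ler0n R K; lra.
apply: psd_gen => // x v.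
rewrite -[x]submxcolK /Ddiag mul_mxdiag_mxcol ip_mxcol -mxrow_Ablk mul_mxrow_mxcol.
rewrite ip_sumr mulr_sumr.
have -> : K.+1%:R / mu - mu^-1 = K%:R * mu^-1 by rewrite -addn1 natrD; field.
have eK : K%:R * (mu^-1 * ip v v) = \sum_(i < K) mu^-1 * ip v v.
  by rewrite sumr_const card_ord mulr_natl.
rewrite -mulrA eK.
rewrite -!big_split /=; apply: sumr_ge0 => i _.
rewrite mul_scalar_mx ipZr.
have [hb _] := eig_bound hmu (heig i).
exact: blockpsd.
Qed.
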